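(* Let ${\cal F}=(V,E)$ be a hypergraph with $V=[n]$ and all hyperedges in $E$ of size at most $d$. Let $q$ and $\chi$ be positive integers such that $1\leq q\leq |E|-1$ and $\chi=\min\{ |\bigcup_{i=1}^q e'_i\setminus e| : e,e'_1,\ldots,e'_q \text{ are } q+1 \text{ distinct hyperedges of } E\}$. Then, in the group testing model where exactly one hyperedge $e^*\in E$ is the defective (contaminated) set and a test on a pool $T\subseteq[n]$ is positive if and only if $T\cap e^*\neq\emptyset$, there exists a trivial two-stage group testing algorithm (two stages, each completely non-adaptive, with the second stage consisting only of tests on individual elements) that finds the defective hyperedge and uses a number of tests $t$ with $$ t< \frac {2e(d+\chi)}{\chi} \left(1+ \ln\left({d+\chi-1\choose d+\chi-d-1}\beta\right)\right)+dq,$$ where $\beta=\min\left\{e^q|E|\left({|E|-1\over q}\right)^q, e^{d+\chi-1}\left({n+d-1\over d+\chi-1}\right)^{d+\chi}\right\}$ and $e=2.7182\ldots$ is the base of the natural logarithm.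
   Context: Group testing in a hypergraph ${\cal F}=([n],E)$: the set of defective elements is one unknown hyperedge $e^*\in E$; a test on a pool of elements answers ''yes'' iff the pool contains at least one defective element. A two-stage algorithm consists of two stages, each a completely non-adaptive algorithm (all tests of a stage chosen beforehand); it is trivial if the second stage only tests individual elements. The first stage tests the pools given by the rows of a selector, after which at most $q$ candidate hyperedges remain, and the second stage individually tests their at most $dq$ vertices. *)

(* Defs.v *)
From HB Require Import structures.
From mathcomp Require Import all_boot all_order all_algebra.
Set Implicit Arguments. Unset Strict Implicit. Unset Printing Implicit Defensive.
Import Order.TTheory GRing.Theory Num.Theory.

(* A configuration of q+1 distinct hyperedges e, e'_1, ..., e'_q of E:
   f enumerates e'_1..e'_q (injective), none of them equals e. *)
Definition distinct_config (n q : nat) (E : {set {set 'I_n}})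
  (e : {set 'I_n}) (f : 'I_q -> {set 'I_n}) : Prop :=
  [/\ e \in E, (forall i, f i \in E), injective f & (forall i, f i != e)].

Definition config_value (n q : nat) (e : {set 'I_n}) (f : 'I_q -> {set 'I_n}) : nat :=
  #|(\bigcup_(i < q) f i) :\: e|.

Definition is_chi (n : nat) (E : {set {set 'I_n}}) (q chi : nat) : Prop :=
  (exists e (f : 'I_q -> {set 'I_n}), distinct_config E e f /\ config_value e f = chi) /\
  (forall e (f : 'I_q -> {set 'I_n}), distinct_config E e f -> chi <= config_value e f).

(* A trivial two-stage algorithm: stage 1 is a fixed list of pools;
   stage 2 is a set of single elements to test individually, chosen
   (non-adaptively within the stage) as a function of the stage-1 outcomes. *)
Record two_stage_trivial (n : nat) := TwoStage {
  stage1 : seq {set 'I_n};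
  stage2 : seq bool -> {set 'I_n} }.

Definition test (n : nat) (es T : {set 'I_n}) : bool := T :&: es != set0.

Definition outcomes1 (n : nat) (A : two_stage_trivial n) (es : {set 'I_n}) : seq bool :=
  [seq test es T | T <- stage1 A].

Definition outcomes2 (n : nat) (A : two_stage_trivial n) (es : {set 'I_n}) : {set 'I_n} :=
  stage2 A (outcomes1 A es) :&: es.

Definition finds_defective (n : nat) (E : {set {set 'I_n}}) (A : two_stage_trivial n) : Prop :=
  forall e1 e2, e1 \in E -> e2 \in E ->
    outcomes1 A e1 = outcomes1 A e2 -> outcomes2 A e1 = outcomes2 A e2 -> e1 = e2.

Definition num_tests (n : nat) (E : {set {set 'I_n}}) (A : two_stage_trivial n) : nat :=
  size (stage1 A) + \max_(e in E) #|stage2 A (outcomes1 A e)|.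

(* Main.v *)
Require Import Defs.
From HB Require Import structures.
From mathcomp Require Import all_boot all_order all_algebra.
From mathcomp Require Import zify ring lra.
Import Order.TTheory GRing.Theory Num.Theory.


Lemma ffact_le_exp n m : (n ^_ m <= n ^ m)%N.
Proof.
elim: m n => [|m IH] n; first by rewrite ffactn0 expn0.
rewrite ffactnS expnS leq_mul2l; apply/orP; right.
apply: leq_trans (IH _) _; case: m {IH} => [|m]; first by rewrite !expn0.
by rewrite leq_exp2r // leq_pred.
Qed.

Lemma bin_fact_le n k : ('C(n, k) * k`! <= n ^ k)%N.
Proof. by rewrite bin_ffact ffact_le_exp. Qed.

Lemma card_bigcup_le (T I : finType) (A : {pred I}) (F : I -> {set T}) :
  (#|\bigcup_(i in A) F i| <= \sum_(i in A) #|F i|)%N.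
Proof.
apply: (big_ind2 (fun (U : {set T}) s => #|U| <= s)%N) => //.
- by rewrite cards0.
- move=> U1 s1 U2 s2 h1 h2; apply: leq_trans (leq_card_setU U1 U2) _.
  exact: leq_add.
Qed.

Lemma card_small_sets (T : finType) d :
  (#|[set A : {set T} | #|A| <= d]| <= \sum_(k < d.+1) 'C(#|T|, k))%N.
Proof.
elim: d => [|d IH].
  rewrite big_ord_recr big_ord0 /= -card_draws.
  apply: (@leq_trans #|[set A : {set T} | #|A| == 0]|); last exact: leq_addl.
  by apply/subset_leq_card/fintype.subsetP => A; rewrite !inE leqn0.
rewrite big_ord_recr /= -card_draws.
apply: leq_trans (leq_add IH (leqnn _)).
apply: leq_trans (leq_card_setU _ _).
apply/subset_leq_card/fintype.subsetP => A; rewrite !inE leq_eqVlt ltnS.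
by rewrite orbC.
Qed.

Lemma sum_bin_le n d : (\sum_(k < d.+1) 'C(n, k) <= 'C(n + d, d))%N.
Proof.
rewrite -binomial.Vandermonde; apply: leq_sum => k _.
rewrite -{1}(muln1 'C(n, k)) leq_mul2l bin_gt0 leq_subr orbT //.
Qed.

Lemma card_E_le n d (E : {set {set 'I_n}}) :
  (forall e, e \in E -> #|e| <= d)%N -> (#|E| <= 'C(n + d, d))%N.
Proof.
move=> hE; apply: leq_trans (sum_bin_le n d).
have := card_small_sets ('I_n) d; rewrite card_ord; apply: leq_trans.
by apply/subset_leq_card/fintype.subsetP => A AE; rewrite inE hE.
Qed.


Local Open Scope ring_scope.
Set Implicit Arguments. Unset Strict Implicit.




Section W.
Variables (R : realFieldType) (T : finType) (p : R).

Definition wt (X : {set T}) : R := \prod_(x : T) (if x \in X then p else 1 - p).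

Definition cov (X : {set T}) (x : {set T} * {set T}) : bool :=
  (X :&: x.1 == set0) && (X :&: x.2 != set0).

Lemma sum_wt_avoid (C : {set T}) :
  \sum_(X : {set T}) wt X * (X :&: C == set0)%:R = (1 - p) ^+ #|C|.
Proof.
pose g (x : T) (b : bool) : R := if b then (if x \in C then 0 else p) else 1 - p.
have prod_g (X : {set T}) : \prod_x g x (x \in X) = wt X * (X :&: C == set0)%:R.
  case: (boolP (X :&: C == set0)) => h.
    rewrite mulr1 /wt; apply: eq_bigr => x _; rewrite /g.
    case xX: (x \in X) => //.
    have : x \notin X :&: C by rewrite (eqP h) in_set0.
    by rewrite inE xX /= => /negbTE ->.
  case/set0Pn: h => x; rewrite inE => /andP [xX xC].
  by rewrite mulr0 (bigD1 x) //= /g xX xC mul0r.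
have lhs : \prod_(x : T) \sum_(b : bool) g x b = (1 - p) ^+ #|C|.
  rewrite -prodr_const (big_mkcond (fun x => x \in C)) /=.
  apply: eq_bigr => x _; rewrite big_bool /g /=.
  by case: (x \in C) => /=; rewrite ?add0r // addrC subrK.
rewrite -lhs bigA_distr_bigA /=.
rewrite (reindex (fun f : {ffun T -> bool} => [set x | f x])) /=; last first.
  exists (fun X : {set T} => [ffun x => x \in X]) => [f _|X _].
    by apply/ffunP => x; rewrite ffunE inE.
  by apply/setP => x; rewrite inE ffunE.
apply: eq_bigr => f _; rewrite -prod_g; apply: eq_bigr => x _.
by rewrite inE.
Qed.

Lemma sum_wt1 : \sum_(X : {set T}) wt X = 1.
Proof.
have := sum_wt_avoid set0; rewrite cards0 expr0 => <-.
by apply: eq_bigr => X _; rewrite setI0 eqxx mulr1.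
Qed.

Lemma sum_wt_cov (A B : {set T}) : [disjoint A & B] ->
  \sum_(X : {set T}) wt X * (cov X (A, B))%:R =
  (1 - p) ^+ #|A| * (1 - (1 - p) ^+ #|B|).
Proof.
move=> dAB.
have e X : (cov X (A, B))%:R = (X :&: A == set0)%:R - (X :&: (A :|: B) == set0)%:R :> R.
  rewrite /cov /= setIUr setU_eq0.
  by case: (X :&: A == set0); case: (X :&: B == set0); rewrite /= ?subrr ?subr0.
under eq_bigr => X _ do rewrite e mulrBr.
rewrite sumrB !sum_wt_avoid.
have -> : #|A :|: B| = (#|A| + #|B|)%N.
  by rewrite cardsU; move: dAB; rewrite -setI_eq0 => /eqP ->; rewrite cards0 subn0.
by rewrite exprD mulrBr mulr1.
Qed.

Hypothesis p01 : 0 <= p <= 1.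

Lemma wt_ge0 X : 0 <= wt X.
Proof.
case/andP: p01 => h0 h1.
apply: prodr_ge0 => x _; case: (x \in X) => //; lra.
Qed.

Lemma exists_good (O : {set {set T} * {set T}}) (P : R) :
  (forall x, x \in O -> P <= \sum_(X : {set T}) wt X * (cov X x)%:R) ->
  exists X, P * #|O|%:R <= #|O :&: [set x | cov X x]|%:R.
Proof.
move=> hO.
pose cnt X := #|O :&: [set x | cov X x]|.
have cntE X : (cnt X)%:R = \sum_(x in O) (cov X x)%:R :> R.
  rewrite /cnt -sum1_card natr_sum big_mkcond [in RHS]big_mkcond /=.
  apply: eq_bigr => x _; rewrite !inE.
  by case: (x \in O); case: (cov X x).
case: (@arg_maxnP _ set0 xpredT cnt isT) => Xm _ hm.
exists Xm.
apply: le_trans (_ : \sum_(x in O) \sum_(X : {set T}) wt X * (cov X x)%:R <= _).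
  rewrite mulr_natr -sumr_const; exact: ler_sum.
rewrite exchange_big /=.
apply: le_trans (_ : \sum_(X : {set T}) wt X * (cnt Xm)%:R <= _).
  apply: ler_sum => X _; rewrite -mulr_sumr -cntE.
  by apply: ler_wpM2l; [exact: wt_ge0 | rewrite ler_nat; exact: hm].
by rewrite -mulr_suml sum_wt1 mul1r.
Qed.

Lemma greedy (P : R) (k : nat) (O : {set {set T} * {set T}}) :
  P <= 1 ->
  (forall x, x \in O -> P <= \sum_(X : {set T}) wt X * (cov X x)%:R) ->
  #|O|%:R * (1 - P) ^+ k < 1 ->
  exists s : seq {set T}, (size s <= k)%N /\
    forall x, x \in O -> has (fun X => cov X x) s.
Proof.
move=> P1; elim: k O => [|k IH] O hO hk.
  exists [::]; split => // x xO; move: hk; rewrite expr0 mulr1.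
  have h : (1:R) <= #|O|%:R by rewrite ler1n; apply/card_gt0P; exists x.
  lra.
case: (exists_good hO) => X hX.
pose O' := O :\: [set x | cov X x].
have hO' x : x \in O' -> P <= \sum_(X : {set T}) wt X * (cov X x)%:R.
  by rewrite inE => /andP [_ xO]; exact: hO.
have cE := cardsID [set x | cov X x] O.
have hk' : #|O'|%:R * (1 - P) ^+ k < 1.
  apply: le_lt_trans hk.
  have -> : #|O'|%:R = #|O|%:R - #|O :&: [set x | cov X x]|%:R :> R.
    by rewrite -cE natrD addrC addKr.
  rewrite exprS mulrA; apply: ler_wpM2r; first by apply: exprn_ge0; lra.
  lra.
case: (IH O' hO' hk') => s [hs hcov].
exists (X :: s); split => //= x xO.
case cx: (cov X x) => //=; apply: hcov; by rewrite inE inE cx xO.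
Qed.

End W.

Unset Implicit Arguments. Set Strict Implicit.

Lemma main_comb (R : realFieldType) n d q (E : {set {set 'I_n}}) (p P : R)
  (O : {set {set 'I_n} * {set 'I_n}}) (t : nat) :
  (forall e, e \in E -> #|e| <= d)%N ->
  0 <= p <= 1 -> P <= 1 ->
  (forall x, x \in O -> P <= \sum_(X : {set 'I_n}) wt p X * (cov X x)%:R) ->
  (forall e (f : 'I_q -> {set 'I_n}), distinct_config E e f ->
     exists B, (e, B) \in O /\ B \subset (\bigcup_(i < q) f i) :\: e) ->
  #|O|%:R * (1 - P) ^+ t < 1 ->
  exists A, finds_defective E A /\ (num_tests E A <= t + d * q)%N.
Proof.
move=> hE p01 P1 hO hconf ht.
case: (greedy p01 P1 hO ht) => s [hs hcov].
pose out (e : {set 'I_n}) := [seq test e T | T <- s].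
pose A := TwoStage s (fun o => \bigcup_(e' in E | out e' == o) e').
have sub e : e \in E -> e \subset stage2 A (outcomes1 A e).
  by move=> eE; apply: (bigcup_sup e); rewrite eE eqxx.
exists A; split.
  move=> e1 e2 h1 h2 ho1 ho2.
  move: ho2; rewrite /outcomes2 (setIidPr (sub _ h1)) (setIidPr (sub _ h2)).
  done.
rewrite /num_tests; apply: leq_add => //.
apply/bigmax_leqP => e eE.
pose cls := [set e' in E | out e' == out e].
have -> : stage2 A (outcomes1 A e) = \bigcup_(e' in cls) e'.
  by apply: eq_bigl => e'; rewrite inE.
apply: leq_trans (@card_bigcup_le _ _ cls (fun x => x)) _.
apply: leq_trans (_ : \sum_(e' in cls) d <= _)%N.
  by apply: leq_sum => e'; rewrite inE => /andP [/hE].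
rewrite sum_nat_const mulnC leq_mul2l; apply/orP; right.
rewrite leqNgt; apply/negP => hq.
have ecls : e \in cls by rewrite inE eE eqxx.
pose S := cls :\ e.
have hS : (q <= #|S|)%N by move: hq; rewrite (cardsD1 e cls) ecls add1n ltnS.
pose f (i : 'I_q) := nth finset.set0 (enum S) i.
have fS i : f i \in S.
  by rewrite -mem_enum; apply: mem_nth; rewrite -cardE; apply: leq_trans hS.
have finj : injective f.
  move=> i j; rewrite /f => /eqP; rewrite nth_uniq ?enum_uniq -?cardE //.
  - by move/eqP/val_inj.
  - exact: leq_trans (ltn_ord i) hS.
  - exact: leq_trans (ltn_ord j) hS.
have fcls (k1 : 'I_q) : f k1 \in cls by have := fS k1; rewrite inE => /andP [].
have dc : distinct_config E e f.
  split => //.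
  - by move=> i1; have := fcls i1; rewrite inE => /andP [->].
  - by move=> i1; have := fS i1; rewrite !inE => /andP [->].
case: (hconf e f dc) => B [eBO BU].
have /hasP [T Ts] := hcov _ eBO.
rewrite /cov /= => /andP [/eqP Te /set0Pn [y]].
rewrite inE => /andP [yT yB].
have := fintype.subsetP BU y yB; rewrite inE => /andP [_ /bigcupP [i _ yf]].
have : out (f i) = out e by have := fcls i; rewrite inE => /andP [_ /eqP].
move/eq_in_map => /(_ T Ts); rewrite /test Te eqxx /=.
have hy : T :&: f i != finset.set0 by apply/set0Pn; exists y; rewrite inE yT.
by rewrite hy.

Qed.

Set Implicit Arguments. Unset Strict Implicit.


Section Obj.
Variables (n d q chi : nat) (E : {set {set 'I_n}}).
Hypothesis hE : forall e, e \in E -> (#|e| <= d)%N.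
Hypothesis hchi : is_chi E q chi.

Definition cfgb (e : {set 'I_n}) (f : {ffun 'I_q -> {set 'I_n}}) : bool :=
  [&& e \in E, [forall i, f i \in E], injectiveb f & [forall i, f i != e]].

Lemma cfgbP e (f : {ffun 'I_q -> {set 'I_n}}) : cfgb e f -> distinct_config E e f.
Proof.
case/and4P => eE /forallP fE /injectiveP fi /forallP fe; by split.
Qed.

Definition O1 : {set {set 'I_n} * {set 'I_n}} :=
  [set ((x : {set 'I_n} * {ffun 'I_q -> {set 'I_n}}).1,
         \bigcup_(i < q) (x.2 : {ffun 'I_q -> {set 'I_n}}) i :\: x.1) |
     x in [set x : {set 'I_n} * {ffun 'I_q -> {set 'I_n}} | cfgb x.1 x.2]].

Definition O2 : {set {set 'I_n} * {set 'I_n}} :=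
  [set x : {set 'I_n} * {set 'I_n} | [&& x.1 \in E, #|x.2| == chi & [disjoint x.1 & x.2]]].

Definition good (O : {set {set 'I_n} * {set 'I_n}}) :=
  forall x, x \in O -> [/\ (#|x.1| <= d)%N, (chi <= #|x.2|)%N & [disjoint x.1 & x.2]].

Definition covers (O : {set {set 'I_n} * {set 'I_n}}) :=
  forall e (f : 'I_q -> {set 'I_n}), distinct_config E e f ->
     exists B, (e, B) \in O /\ B \subset (\bigcup_(i < q) f i) :\: e.

Lemma disj_D (A B : {set 'I_n}) : [disjoint A & B :\: A].
Proof.
rewrite -setI_eq0; apply/eqP/setP => y; rewrite !inE.
by case: (y \in A); rewrite ?andbF.
Qed.

Lemma O1_good : good O1.
Proof.
move=> x /imsetP [[e f]]; rewrite inE /= => hc -> /=.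
have dc := cfgbP hc.
case: dc => eE _ _ _; split; [exact: hE | | exact: disj_D].
exact: hchi.2 _ _ (cfgbP hc).
Qed.

Lemma O1_covers : covers O1.
Proof.
move=> e f dc; exists ((\bigcup_(i < q) f i) :\: e); split => //.
have -> : \bigcup_(i < q) f i = \bigcup_(i < q) [ffun i => f i] i.
  by apply: eq_bigr => i _; rewrite ffunE.
apply/imsetP; exists (e, [ffun i => f i]) => //.
rewrite inE /=; case: dc => eE fE fi fe.
apply/and4P; split => //.
- by apply/forallP => i; rewrite ffunE.
- by apply/injectiveP => i j; rewrite !ffunE; exact: fi.
- by apply/forallP => i; rewrite ffunE.
Qed.

Lemma O2_good : good O2.
Proof.
move=> [A B]; rewrite inE /= => /and3P [AE /eqP <- dAB]; split => //.
exact: hE.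
Qed.

Lemma O2_covers : covers O2.
Proof.
move=> e f dc.
have hc := hchi.2 _ _ dc.
set U := (\bigcup_(i < q) f i) :\: e.
have : (0 < #|[set B : {set 'I_n} | B \subset U & #|B| == chi]|)%N.
  by rewrite cards_draws bin_gt0.
case/card_gt0P => B; rewrite inE => /andP [BU /eqP cB].
exists B; split => //; rewrite inE /= cB eqxx /=.
case: dc => -> _ _ _ /=.
rewrite -setI_eq0; apply/eqP/setP => y; rewrite !inE.
case yB: (y \in B); last by rewrite andbF.
have := fintype.subsetP BU y yB; rewrite inE => /andP [/negbTE -> _].
by [].
Qed.

Lemma O2_card : (#|O2| * (d`! * chi`!) <= (n + d) ^ (d + chi))%N.
Proof.
have h1 : (#|O2| <= #|E| * 'C(n, chi))%N.
  have cd : #|[set B : {set 'I_n} | #|B| == chi]| = 'C(n, chi) by rewrite card_draws card_ord.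
  rewrite -cd -cardsX.
  apply/subset_leq_card/fintype.subsetP => [[A B]]; rewrite !inE /=.
  by case/and3P => -> -> _.
have h2 := card_E_le _ _ _ hE.
apply: leq_trans (_ : #|E| * 'C(n, chi) * (d`! * chi`!) <= _)%N.
  by rewrite leq_mul2r h1 orbT.
apply: leq_trans (_ : 'C(n + d, d) * d`! * ('C(n, chi) * chi`!) <= _)%N.
  rewrite mulnACA leq_mul2r; apply/orP; right; by rewrite leq_mul2r h2 orbT.
rewrite expnD; apply: leq_mul; first exact: bin_fact_le.
apply: leq_trans (bin_fact_le _ _) _.
case: chi => [|c]; first by rewrite !expn0.
by rewrite leq_exp2r // leq_addr.
Qed.

Lemma O1_card : (#|O1| <= #|E| * 'C(#|E| - 1, q))%N.
Proof.
pose G (e : {set 'I_n}) := [set (e, (\bigcup_(X in (F : {set {set 'I_n}})) X) :\: e) |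
   F in [set F : {set {set 'I_n}} | F \subset E :\ e & #|F| == q]].
apply: leq_trans (_ : #|\bigcup_(e in E) G e| <= _)%N.
  apply/subset_leq_card/fintype.subsetP => y /imsetP [[e f]]; rewrite inE /= => hc ->.
  have dc := cfgbP hc; case: dc => eE fE fi fe.
  apply/bigcupP; exists e => //; apply/imsetP.
  exists [set f i | i : 'I_q].
    rewrite inE; apply/andP; split.
      by apply/fintype.subsetP => X /imsetP [i _ ->]; rewrite !inE fe fE.
    by rewrite card_imset ?card_ord.
  congr (_, _); congr (_ :\: _); apply/setP => y'.
  apply/bigcupP/bigcupP => [[i _ yi] | [X /imsetP [i _ ->] yi]].
    by exists (f i) => //; apply/imsetP; exists i.
  by exists i.
apply: leq_trans (@card_bigcup_le _ _ E G) _.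
rewrite -sum_nat_const; apply: leq_sum => e eE.
apply: leq_trans (leq_imset_card _ _) _.
by rewrite cards_draws (cardsD1 e E) eE add1n subn1 /=.
Qed.

End Obj.

Lemma algo (R : realFieldType) n d q chi (E : {set {set 'I_n}})
  (O : {set {set 'I_n} * {set 'I_n}}) (p : R) (t : nat) :
  (forall e, e \in E -> (#|e| <= d)%N) ->
  @good n d chi O -> @covers n q E O -> 0 <= p <= 1 ->
  #|O|%:R * (1 - (1 - p) ^+ d * (1 - (1 - p) ^+ chi)) ^+ t < 1 ->
  exists A, finds_defective E A /\ (num_tests E A <= t + d * q)%N.
Proof.
move=> hE hg hc p01 ht.
have /andP [p0 p1] := p01.
have q0 : 0 <= 1 - p by lra.
have q1 : 1 - p <= 1 by lra.
have pow01 k : 0 <= (1 - p) ^+ k <= 1.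
  by rewrite exprn_ge0 // exprn_ile1.
apply: (@main_comb R n d q E p ((1 - p) ^+ d * (1 - (1 - p) ^+ chi)) O t) hE p01 _ _ hc ht.
  have /andP [a0 a1] := pow01 d; have /andP [b0 b1] := pow01 chi.
  have h1 : 1 - (1 - p) ^+ chi <= 1 by lra.
  have h2 : 0 <= 1 - (1 - p) ^+ chi by lra.
  by have := ler_pM a0 h2 a1 h1; rewrite mulr1.
move=> [A B] hx; have [hA hB dAB] := hg _ hx.
rewrite sum_wt_cov //=.
have /andP [a0 a1] := pow01 d; have /andP [b0 b1] := pow01 chi.
apply: ler_pM => //.
- lra.
- exact: ler_wiXn2l.
- rewrite lerD2l lerN2; exact: ler_wiXn2l.
Qed.

Lemma basic_facts n d q chi (E : {set {set 'I_n}}) :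
  (forall e, e \in E -> (#|e| <= d)%N) -> is_chi E q chi -> (0 < chi)%N ->
  (0 < d)%N /\ (chi <= n)%N.
Proof.
move=> hE [[e [f [dc hv]]] _] c0.
case: dc => eE fE _ _.
split; last first.
  by rewrite -hv /config_value; apply: leq_trans (max_card _) _; rewrite card_ord.
have : (0 < config_value e f)%N by rewrite hv.
rewrite /config_value => /card_gt0P [y]; rewrite inE => /andP [_ /bigcupP [i _ yi]].
apply: leq_trans (hE _ (fE i)); apply/card_gt0P; by exists y.
Qed.

Lemma covers_pos n q chi (E : {set {set 'I_n}}) O :
  @covers n q E O -> is_chi E q chi -> (0 < #|O|)%N.
Proof.
move=> hc [[e [f [dc _]]] _]; case: (hc e f dc) => B [hB _].
by apply/card_gt0P; exists (e, B).
Qed.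

Unset Implicit Arguments. Set Strict Implicit.

From mathcomp Require Import all_classical all_reals all_analysis.
Import Order.TTheory GRing.Theory Num.Theory.
Local Open Scope ring_scope.

Section D.
Variable R : realType.
Local Notation e1 := (expR (1:R)).

Lemma e1_ge2 : 2 <= e1.
Proof. by have := expR_ge1Dx (1:R); rewrite (_ : 1 + 1 = 2). Qed.

Lemma pow_le_exp (x : R) k : 0 <= 1 + x -> (1 + x) ^+ k <= expR (x * k%:R).
Proof.
move=> h; rewrite expRM_natr; apply: lerXn2r; rewrite ?nnegrE ?expR_ge0 //.
exact: expR_ge1Dx.
Qed.

Lemma kk k : (k%:R : R) ^+ k <= e1 ^+ k * k`!%:R.
Proof.
elim: k => [|k IH]; first by rewrite !expr0 mul1r.
have h1 : (k.+1%:R : R) ^+ k <= e1 * k%:R ^+ k.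
  case: k {IH} => [|k]; first by rewrite !expr0 mulr1; have := e1_ge2; lra.
  have -> : (k.+2%:R : R) = k.+1%:R * (1 + k.+1%:R^-1).
    by rewrite mulrDr mulr1 mulfV // -natr1 addrC.
  rewrite exprMn mulrC; apply: ler_wpM2r; first exact: exprn_ge0.
  have := @pow_le_exp (k.+1%:R^-1) k.+1; rewrite mulVf //; apply.
  by apply: addr_ge0 => //; rewrite invr_ge0.
rewrite exprS factS natrM exprS.
have k0 : (0:R) <= k.+1%:R by [].
have e0 : (0:R) <= e1 by exact: expR_ge0.
have := ler_wpM2l k0 h1.
have := ler_wpM2l (mulr_ge0 k0 e0) IH.
nra.
Qed.

Lemma bin_le_real M q : (0 < q)%N ->
  ('C(M, q)%:R : R) <= e1 ^+ q * (M%:R / q%:R) ^+ q.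
Proof.
move=> q0.
have h1 : ('C(M, q)%:R : R) * q`!%:R <= M%:R ^+ q.
  by rewrite -natrM -natrX ler_nat; exact: bin_fact_le.
have h2 := kk q.
have qq : (0:R) < q%:R ^+ q by apply: exprn_gt0; rewrite ltr0n.
have c0 : (0:R) <= 'C(M, q)%:R by [].
have e0 : (0:R) <= e1 ^+ q by apply: exprn_ge0; exact: expR_ge0.
rewrite expr_div_n mulrA ler_pdivlMr //.
nra.
Qed.

Lemma one_minus_pow (a : R) k : 0 <= a -> a <= 1 ->
  (1 - a) ^+ k <= 1 - k%:R * a + (k%:R * (k%:R - 1) / 2) * a ^+ 2.
Proof.
move=> a0 a1; elim: k => [|k IH]; first by rewrite expr0 !mul0r subr0 addr0.
have kk0 : (0:R) <= k%:R * (k%:R - 1).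
  by case: k {IH} => [|k]; rewrite ?mul0r // mulr_ge0 // -natr1 addrK.
rewrite exprS.
apply: le_trans (_ : (1 - a) * (1 - k%:R * a + k%:R * (k%:R - 1) / 2 * a ^+ 2) <= _).
  by apply: ler_wpM2l => //; lra.
rewrite -natr1 expr2 -subr_ge0.
have h3 : 0 <= k%:R * (k%:R - 1) * (a * a * a) by apply: mulr_ge0 => //; nra.
set L := (X in 0 <= X).
have -> : L = k%:R * (k%:R - 1) * (a * a * a) / 2 by rewrite /L; field.
by apply: divr_ge0.
Qed.

Lemma e_pow_ge1 j : (0 < j)%N -> 1 <= e1 * (1 - j.+1%:R^-1) ^+ j.
Proof.
move=> j0.
have hj : (0:R) < j%:R by rewrite ltr0n.
have h := @pow_le_exp (j%:R^-1) j; rewrite mulVf ?gt_eqF // in h.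
have h' := h (ltW _).
have E1 : (1 - j.+1%:R^-1) * (1 + j%:R^-1) = 1 :> R.
  rewrite -natr1; field.
  by apply/andP; split; rewrite ?gt_eqF //; lra.
apply: le_trans (_ : ((1 - j.+1%:R^-1) * (1 + j%:R^-1)) ^+ j <= _).
  by rewrite E1 expr1n.
rewrite exprMn mulrC; apply: ler_wpM2r.
  by apply: exprn_ge0; rewrite subr_ge0 invf_le1 ?ler1n ?ltr0n.
apply: h'; apply: lt_le_trans (_ : 0 < 1) _ => //; rewrite lerDl invr_ge0; lra.
Qed.

Lemma Pbound d chi (p : R) : (0 < d)%N -> (0 < chi)%N ->
  p = ((d + chi)%N%:R : R)^-1 ->
  chi%:R * (d + chi + d + 1)%N%:R <=
  (1 - p) ^+ d * (1 - (1 - p) ^+ chi) * (2 * e1 * (d + chi)%N%:R * (d + chi)%N%:R).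
Proof.
move=> d0 c0 hp.
have [j hj] : exists j, (d + chi = j.+1)%N by exists (d + chi).-1; lia.
have j0 : (0 < j)%N by lia.
have hm : ((d + chi)%N%:R : R) = j.+1%:R by rewrite hj.
have mpos : (0 : R) < j.+1%:R by rewrite ltr0n.
have p01 : 0 <= p <= 1.
  by rewrite hp hm invr_ge0 ltW //= invf_le1 // ler1n.
case/andP: p01 => p0 p1.
have X1 : 1 <= e1 * (1 - p) ^+ d.
  apply: le_trans (e_pow_ge1 _ j0) _; rewrite -hm -hp.
  apply: ler_wpM2l; first exact: expR_ge0.
  apply: ler_wiXn2l; [lra | lra | lia].
have Y1 := one_minus_pow p chi p0 p1.
have pm : p * j.+1%:R = 1 by rewrite hp hm mulVf ?gt_eqF.
have Ye : (chi%:R * p - (chi%:R * (chi%:R - 1) / 2) * p ^+ 2) * (2 * j.+1%:R * j.+1%:R)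
          = chi%:R * (2 * j.+1%:R - chi%:R + 1) :> R.
  rewrite expr2; have : p = j.+1%:R^-1 by rewrite hp hm.
  move=> ->; field; rewrite gt_eqF //.
have Y0 : (chi%:R * p - (chi%:R * (chi%:R - 1) / 2) * p ^+ 2) <= 1 - (1 - p) ^+ chi by lra.
rewrite hm.
have -> : ((d + chi + d + 1)%N%:R : R) = 2 * j.+1%:R - chi%:R + 1.
  by rewrite -hm !natrD; lra.
rewrite -Ye.
set Y := 1 - (1 - p) ^+ chi.
set Z := chi%:R * p - _.
have M0 : (0:R) <= 2 * j.+1%:R * j.+1%:R by [].
have YZ := ler_wpM2r M0 Y0.
have Ypos : 0 <= Y.
  by rewrite /Y subr_ge0 exprn_ile1 // ?subr_ge0 // lerBlDr lerDl.
set X := (1 - p) ^+ d.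
have -> : X * Y * (2 * e1 * j.+1%:R * j.+1%:R) = (e1 * X) * (Y * (2 * j.+1%:R * j.+1%:R)).
  by ring.
apply: le_trans YZ _.
rewrite -[X in X <= _]mul1r; apply: ler_wpM2r => //.
exact: mulr_ge0.
Qed.

Lemma pow_succ_le (b : R) m : 0 < b -> m%:R <= 2 * b ->
  (b + 1) ^+ m <= e1 ^+ 2 * b ^+ m.
Proof.
move=> b0 hm.
have -> : b + 1 = b * (1 + b^-1) by rewrite mulrDr mulr1 mulfV ?gt_eqF.
rewrite exprMn mulrC; apply: ler_wpM2r; first by apply: exprn_ge0; exact: ltW.
have hb : 0 <= 1 + b^-1 by apply: addr_ge0 => //; rewrite invr_ge0 ltW.
apply: le_trans (pow_le_exp _ m hb) _.
rewrite -expRM_natl mulr1 ler_expR.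
by rewrite mulrC ler_pdivrMr // mulrC.
Qed.

Lemma case2_bound (n d chi N2 C : nat) : (0 < d)%N -> (0 < chi)%N -> (chi <= n)%N ->
  (N2 * (d`! * chi`!) <= (n + d) ^ (d + chi))%N ->
  (C * ((chi - 1)`! * d`!) = (d + chi - 1)`!)%N ->
  (N2%:R : R) <= C%:R * (e1 ^+ (d + chi - 1)%N *
     ((n + d - 1)%N%:R / (d + chi - 1)%N%:R) ^+ (d + chi)%N) * (d%:R * e1 ^+ 2).
Proof.
case: chi => [//|c] d0 _ cn hN hC.
rewrite (_ : (d + c.+1 - 1 = d + c)%N) in hC *; last lia.
rewrite (_ : (c.+1 - 1 = c)%N) in hC; last lia.
set j := (d + c)%N.
have j0 : (0 < j)%N by rewrite /j; lia.
set Np := (n + d - 1)%N.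
have hND : (n + d = Np.+1)%N by rewrite /Np; lia.
have hjN : (j <= Np)%N by rewrite /j /Np; lia.
have hm : (d + c.+1 = j.+1)%N by rewrite /j; lia.
rewrite hm; rewrite hND hm in hN.
set a : R := j%:R; set b : R := Np%:R.
have a0 : 0 < a by rewrite ltr0n.
have b0 : 0 < b by rewrite ltr0n; lia.
set F : R := (d`! * c.+1`!)%:R.
have F0 : 0 < F by rewrite ltr0n muln_gt0 !fact_gt0.
have e0 : (0:R) <= e1 by exact: expR_ge0.
have H1 : N2%:R * F <= (b + 1) ^+ j.+1.
  by rewrite /F /b -natrM natr1 -natrX ler_nat.
have H2 : (b + 1) ^+ j.+1 <= e1 ^+ 2 * b ^+ j.+1.
  apply: pow_succ_le => //; rewrite /b -natrM ler_nat; lia.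
have H3 := kk j.
have H4 : (C%:R : R) * (c`!%:R * d`!%:R) = j`!%:R by rewrite -!natrM hC.
have H5 : a <= c.+1%:R * d%:R by rewrite /a -natrM ler_nat /j; nia.
rewrite expr_div_n.
have am0 : 0 < a ^+ j.+1 by apply: exprn_gt0.
rewrite -(ler_pM2r F0) -(ler_pM2r am0).
apply: le_trans (_ : e1 ^+ 2 * b ^+ j.+1 * a ^+ j.+1 <= _).
  apply: ler_wpM2r; [exact: ltW | exact: le_trans H1 H2].
have -> : C%:R * (e1 ^+ j * (b ^+ j.+1 / a ^+ j.+1)) * (d%:R * e1 ^+ 2) * F * a ^+ j.+1
   = (e1 ^+ 2 * b ^+ j.+1) * (e1 ^+ j * (C%:R * (c`!%:R * d`!%:R)) * (c.+1%:R * d%:R)).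
  rewrite /F factS !natrM; field; exact: lt0r_neq0.
apply: ler_wpM2l; first by apply: mulr_ge0; apply: exprn_ge0 => //; exact: ltW.
rewrite H4 exprS mulrC.
apply: le_trans (_ : a * (e1 ^+ j * j`!%:R) <= _).
  by rewrite mulrC; apply: ler_wpM2l => //; exact: ltW.
rewrite mulrC; apply: ler_wpM2l => //.

Qed.

Lemma final_real (N : nat) (P K L : R) : 0 < P -> P < 1 -> (1 <= N)%N ->
  ln (N%:R : R) <= P * K * (L + 1) - 1 ->
  exists t : nat, N%:R * (1 - P) ^+ t < 1 /\ t%:R < K * (1 + L).
Proof.
move=> P0 P1 N1 hl.
have Npos : (0 : R) < N%:R by rewrite ltr0n.
have lnN0 : 0 <= ln (N%:R : R) by apply: ln_ge0; rewrite ler1n.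
set x := ln (N%:R : R) / P.
have x0 : 0 <= x by apply: divr_ge0 => //; exact: ltW.
exists (Num.truncn x).+1; split.
  have hx := truncnS_gt x.
  set t := (Num.truncn x).+1 in hx *.
  have h1 : (1 - P) ^+ t <= expR (- P * t%:R).
    have := @pow_le_exp (- P) t; rewrite addrC => h; apply: h; lra.
  have h2 : expR (- P * t%:R) < expR (- ln (N%:R : R)).
    rewrite ltr_expR mulNr ltrN2.
    by move: hx; rewrite /x ltr_pdivrMr // mulrC.
  rewrite expRN lnK ?posrE // in h2.
  have h4 : N%:R * expR (- P * t%:R) < N%:R * N%:R^-1 by rewrite ltr_pM2l.
  rewrite mulfV ?gt_eqF // in h4.
  exact: le_lt_trans (ler_wpM2l (ltW Npos) h1) h4.
have ht : (Num.truncn x).+1%:R <= x + 1.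
  by rewrite -natr1 lerD2r truncn_le.
apply: le_lt_trans ht _.
have : x <= K * (L + 1) - P^-1.
  rewrite /x ler_pdivrMr //.
  have -> : (K * (L + 1) - P^-1) * P = P * K * (L + 1) - 1.
    by field; rewrite gt_eqF.
  done.
have : 1 < P^-1 by rewrite invf_gt1.
lra.
Qed.

End D.


Lemma NF d chi n : (0 < d)%N -> (0 < chi)%N -> (chi <= n)%N ->
  [/\ (d + chi - d - 1 = chi - 1)%N, (chi - 1 <= d + chi - 1)%N,
     (d + chi - 1 - (chi - 1) = d)%N, (d + chi - 1 <= n + d - 1)%N &
     ((0 < d + chi - 1)%N /\ (1 <= d + chi)%N)].
Proof. move=> *; split; lia. Qed.

Theorem theorem3 (R : realType) (n d q chi : nat) (E : {set {set 'I_n}}) :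
  (forall e, e \in E -> (#|e| <= d)%N) ->
  (1 <= q)%N -> (q <= #|E| - 1)%N ->
  (0 < chi)%N -> is_chi E q chi ->
  let eu : R := expR 1 in
  let beta : R :=
    Num.min (eu ^+ q * (#|E|)%:R * ((#|E| - 1)%N%:R / q%:R) ^+ q)
            (eu ^+ (d + chi - 1)%N *
               ((n + d - 1)%N%:R / (d + chi - 1)%N%:R) ^+ (d + chi)%N) in
  exists A : two_stage_trivial n,
    finds_defective E A /\
    (num_tests E A)%:R <
       (2 * eu * (d + chi)%N%:R) / chi%:R *
         (1 + ln ('C(d + chi - 1, d + chi - d - 1)%N%:R * beta)) + (d * q)%N%:R.
Proof.
move=> hE q1 qE c0 hchi eu beta.
have [d0 cn] := basic_facts hE hchi c0.
have [nf1 nf2 nf3 nf4 [nf5 nf6]] := NF _ _ _ d0 c0 cn.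
have e0 : (0:R) < eu by exact: expR_gt0.
have mpos : (0:R) < (d + chi)%N%:R by rewrite ltr0n.
have cpos : (0:R) < chi%:R by rewrite ltr0n.
pose p : R := ((d + chi)%N%:R)^-1.
have p01 : 0 <= p <= 1.
  by rewrite /p invr_ge0 ltW //= invf_le1 // ler1n.
have Pb := @Pbound R d chi p d0 c0 erefl.
set P := (1 - p) ^+ d * (1 - (1 - p) ^+ chi) in Pb.
pose K : R := 2 * eu * (d + chi)%N%:R / chi%:R.
have hPK : ((d + chi)%N%:R + (d + 1)%N%:R) <= P * K * (d + chi)%N%:R.
  have -> : P * K * (d + chi)%N%:R = P * (2 * eu * (d + chi)%N%:R * (d + chi)%N%:R) / chi%:R.
    by rewrite /K; field; rewrite gt_eqF.
  rewrite ler_pdivlMr // mulrC; apply: le_trans Pb.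
  by rewrite -natrD -!natrM ler_nat addnA.
have PK1 : 1 <= P * K.
  have : (d + chi)%N%:R <= P * K * (d + chi)%N%:R :> R.
    by apply: le_trans hPK; rewrite lerDl.
  by rewrite -{1}[(d + chi)%N%:R]mul1r ler_pM2r.
have Kpos : 0 < K by rewrite /K; apply: divr_gt0 => //; apply: mulr_gt0 => //; apply: mulr_gt0.
have P0 : 0 < P.
  have : 0 < P * K by apply: lt_le_trans PK1.
  by rewrite pmulr_lgt0.
have P1 : P < 1.
  case/andP: p01 => pa pb.
  have pp : 0 < p by rewrite /p invr_gt0.
  have h1 : (1 - p) ^+ d < 1 by rewrite exprn_ilt1 ?subr_ge0 // ?gtrBl // -lt0n.
  have h2 : 1 - (1 - p) ^+ chi <= 1.
    by rewrite lerBlDr lerDl exprn_ge0 // subr_ge0.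
  have h3 : 0 <= (1 - p) ^+ d by rewrite exprn_ge0 // subr_ge0.
  rewrite /P; apply: le_lt_trans h1; rewrite -[X in _ <= X]mulr1.
  exact: ler_wpM2l.
have hbin := nf1.
rewrite hbin.
set Cb := 'C(d + chi - 1, chi - 1).
have Cb1 : (1:R) <= Cb%:R by rewrite ler1n bin_gt0.
set b1 := eu ^+ q * (#|E|)%:R * ((#|E| - 1)%N%:R / q%:R) ^+ q.
set b2 := eu ^+ (d + chi - 1)%N * ((n + d - 1)%N%:R / (d + chi - 1)%N%:R) ^+ (d + chi)%N.
have key : exists O, [/\ @good n d chi O, @covers n q E O &
    ln (#|O|%:R : R) <= P * K * (ln (Cb%:R * beta) + 1) - 1 /\ 0 <= ln (Cb%:R * beta)].
  have lnE k : ln (eu ^+ k) = k%:R.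
    by rewrite lnXn // /eu expRK.
  have [hb|hb] := leP b1 b2.
  - have hbeta : beta = b1 by rewrite /beta; exact: min_l.
    exists (@O1 n q E); split.
    + exact: (@O1_good n d q chi E hE hchi).
    + exact: (@O1_covers n q E).
    + have hN := @O1_card n q E.
      have Npos : (0:R) < #|@O1 n q E|%:R.
        by rewrite ltr0n; exact: (covers_pos (@O1_covers n q E) hchi).
      have hN' : (#|@O1 n q E|%:R : R) <= b1.
        apply: le_trans (_ : (#|E| * 'C(#|E| - 1, q))%N%:R <= _); first by rewrite ler_nat.
        have -> : b1 = (eu ^+ q * ((#|E| - 1)%N%:R / q%:R) ^+ q) * #|E|%:R by rewrite /b1; ring.
        rewrite natrM mulrC; apply: ler_wpM2r => //.
        exact: bin_le_real.
      have hCb : b1 <= Cb%:R * b1.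
        rewrite -[X in X <= _]mul1r; apply: ler_wpM2r => //.
        exact: le_trans (ltW Npos) hN'.
      have L0 : 0 <= ln (Cb%:R * beta).
        rewrite hbeta; apply: ln_ge0; apply: le_trans hCb.
        apply: le_trans hN'; rewrite ler1n; exact: (covers_pos (@O1_covers n q E) hchi).
      have hL : ln (#|@O1 n q E|%:R : R) <= ln (Cb%:R * beta).
        rewrite hbeta ler_ln ?posrE //; first exact: le_trans hN' hCb.
        exact: lt_le_trans Npos (le_trans hN' hCb).
      split => //; nra.
  - have hbeta : beta = b2 by rewrite /beta; exact: min_r (ltW hb).
    exists (@O2 n chi E); split.
    + exact: (@O2_good n d chi E hE).
    + exact: (@O2_covers n q chi E hchi).
    + set N := #|@O2 n chi E|.
      have N1 : (1 <= N)%N by exact: (covers_pos (@O2_covers n q chi E hchi) hchi).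
      have Npos : (0:R) < N%:R by rewrite ltr0n.
      have hN2 := @O2_card n d chi E hE.
      have hC : (Cb * ((chi - 1)`! * d`!) = (d + chi - 1)`!)%N.
        have := @bin_fact (d + chi - 1) (chi - 1) nf2.
        by rewrite nf3.
      have hb2 := @case2_bound R n d chi N Cb d0 c0 cn hN2 hC.
      have r1 : (1:R) <= (n + d - 1)%N%:R / (d + chi - 1)%N%:R.
        have den : (0:R) < (d + chi - 1)%N%:R by rewrite ltr0n.
        by rewrite ler_pdivlMr // mul1r ler_nat.
      have b2ge : eu ^+ (d + chi - 1)%N <= b2.
        rewrite /b2 -[X in X <= _]mulr1; apply: ler_wpM2l.
          by apply: exprn_ge0; exact: ltW.
        exact: exprn_ege1 r1.
      have b2pos : 0 < b2 by apply: lt_le_trans b2ge; apply: exprn_gt0.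
      have Cbpos : (0:R) < Cb%:R by apply: lt_le_trans Cb1.
      have dpos : (0:R) < d%:R by rewrite ltr0n.
      have Lge : (d + chi - 1)%N%:R <= ln (Cb%:R * beta).
        rewrite hbeta -(lnE (d + chi - 1)%N) ler_ln ?posrE; last first.
          - by apply: mulr_gt0.
          - by apply: exprn_gt0.
        apply: le_trans b2ge _; rewrite -[X in X <= _]mul1r; apply: ler_wpM2r => //.
        exact: ltW.
      have hm1 : ((d + chi - 1)%N%:R : R) = (d + chi)%N%:R - 1.
        by rewrite natrB ?natrD.
      rewrite hm1 in Lge.
      have pA : 0 < Cb%:R * beta by rewrite hbeta; apply: mulr_gt0.
      have pB : (0:R) < d%:R * eu ^+ 2 by apply: mulr_gt0 => //; apply: exprn_gt0.
      have hlnN : ln (N%:R : R) <= ln (Cb%:R * beta) + ln (d%:R : R) + 2.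
        have -> : ln (Cb%:R * beta) + ln (d%:R : R) + 2 = ln ((Cb%:R * beta) * (d%:R * eu ^+ 2)).
          have l1 := @lnM R (Cb%:R * beta) (d%:R * eu ^+ 2).
          have l2 := @lnM R (d%:R) (eu ^+ 2).
          rewrite !posrE in l1 l2.
          have e2 : (0:R) < eu ^+ 2 by apply: exprn_gt0.
          rewrite (l1 pA pB) (l2 dpos e2) lnE; lra.
        rewrite ler_ln ?posrE //; last exact: mulr_gt0.
        by rewrite hbeta; exact: hb2.
      have hlnd : ln (d%:R : R) <= d%:R - 1.
        have h := @le_ln1Dx R (d%:R - 1).
        have e3 : 1 + (d%:R - 1) = d%:R :> R by ring.
        rewrite e3 in h; apply: h.
        have : (1:R) <= d%:R by rewrite ler1n.
        lra.
      split; last by apply: le_trans Lge; rewrite subr_ge0 ler1n.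
      have hint : 0 <= (P * K - 1) * (ln (Cb%:R * beta) + 1 - (d + chi)%N%:R).
        by apply: mulr_ge0; lra.
      move: hPK; rewrite natrD => hPK.
      set L := ln (Cb%:R * beta) in hint hlnN Lge *.
      set M := ((d + chi)%N%:R : R) in hint hPK Lge *.
      have e1 : (P * K - 1) * (L + 1 - M) = P * K * L + P * K - P * K * M - L - 1 + M by ring.
      rewrite e1 in hint; rewrite mulrDr mulr1.
      move: hint hPK; generalize (P * K * L) (P * K * M) (P * K) => a b c.
      lra.
case: key => O [hg hc hl].
  have N1 : (1 <= #|O|)%N by exact: covers_pos hc hchi.
  have [t [ht1 ht2]] := @final_real R #|O| P K _ P0 P1 N1 (proj1 hl).
  have [A [hA hAt]] := algo hE hg hc p01 ht1.
  exists A; split => //.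
  apply: (le_lt_trans (_ : _ <= (t + d * q)%N%:R)); first by rewrite ler_nat.
  by rewrite natrD ltrD2r.
Qed.
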